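(* Let $B$ be a nonempty finite set and $M\subseteq\omega^B$ an upper set. Then the sequence $(\mu_0(M),\mu_1(M),\mu_2(M),\dots)$ is of one of the following forms: (1) $(0,0,\dots)$, which occurs if $M$ is empty; (2) $(0,\dots,0,r_0,\dots,r_{N-1},1,1,\dots)$ for some $N\in\omega$ and reals $0<r_0<\dots<r_{N-1}<1$; (3) $(0,\dots,0,r_0,r_1,\dots)$ for some strictly increasing sequence $(r_i)_{i\in\omega}$ of positive reals with $\lim_{i\to\infty}r_i=1$. In cases (2) and (3) the initial block of zeroes may be empty.
   Context: $\omega$ denotes the set of nonnegative integers and $\omega^B$ the set of functions $B\to\omega$, ordered pointwise. $M\subseteq\omega^B$ is an upper set if $f\in M$ and $f\le g$ imply $g\in M$. For $T\in\omega$, $\mu_T$ is the probability measure on $\omega^B$ that is uniform on $\{f\in\omega^B:\sum_{b\in B}f(b)=T\}$ and zero elsewhere. *)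

(* Defs.v *)
From mathcomp Require Import all_boot.
From Stdlib Require Import Reals.

(* omega^B is modelled as {ffun B -> nat}; a subset M of omega^B as a
   (classically arbitrary) boolean predicate on it. *)

Definition upper_set (B : finType) (M : pred {ffun B -> nat}) : Prop :=
  forall f g : {ffun B -> nat},
    M f -> (forall b, (f b <= g b)%N) -> M g.

(* Number of f in omega^B with sum_b f b = T and f in M.  Such f take values
   <= T, so they are enumerated as functions B -> 'I_(T+1). *)
Definition level_count (B : finType) (T : nat) (M : pred {ffun B -> nat}) : nat :=
  #|[set g : {ffun B -> 'I_T.+1} |
       ((\sum_(b : B) val (g b))%N == T) && M [ffun b => val (g b)]]|.

Definition mu (B : finType) (T : nat) (M : pred {ffun B -> nat}) : R :=
  (INR (level_count B T M) / INR (level_count B T (@predT {ffun B -> nat})))%R.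

(* Main.v *)
Require Import Defs.
From mathcomp Require Import all_boot.
From Stdlib Require Import Reals.
From Stdlib Require Import Lra Classical.
From mathcomp Require Import zify.
Open Scope R_scope.
Set Implicit Arguments. Unset Strict Implicit. Unset Printing Implicit Defensive.
Local Open Scope nat_scope.


Definition fsum (B : finType) (f : {ffun B -> nat}) := (\sum_(b : B) f b)%nat.
Arguments fsum {B} f.

Definition lvl (B : finType) (T : nat) : seq {ffun B -> nat} :=
  map (fun g : {ffun B -> 'I_T.+1} => [ffun b => val (g b)])
      (enum [pred g : {ffun B -> 'I_T.+1} | (\sum_(b : B) val (g b) == T)%nat]).

Definition adde (B : finType) (f : {ffun B -> nat}) (c : B) : {ffun B -> nat} :=
  [ffun b => f b + (b == c)].

Lemma le_fsum (B : finType) (f : {ffun B -> nat}) b : f b <= fsum f.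
Proof. by rewrite /fsum (bigD1 b) //= leq_addr. Qed.

Lemma lvl_uniq (B : finType) T : uniq (lvl B T).
Proof.
rewrite map_inj_uniq ?enum_uniq // => g1 g2 /ffunP e; apply/ffunP => b.
apply: val_inj; have := e b; rewrite !ffunE; done.
Qed.

Lemma mem_lvl (B : finType) T (f : {ffun B -> nat}) : (f \in lvl B T) = (fsum f == T).
Proof.
apply/mapP/idP.
- case=> g; rewrite mem_enum inE => /eqP hs ->. rewrite /fsum.
  under eq_bigr do rewrite ffunE. by rewrite hs.
- move=> /eqP hs. exists [ffun b => inord (f b)].
  + rewrite mem_enum inE. apply/eqP. transitivity (fsum f); last exact: hs. apply eq_bigr => b _.
    rewrite ffunE /= inordK // ltnS; move: (le_fsum f b); rewrite hs //.
  + apply/ffunP => b; rewrite !ffunE /= inordK // ltnS; move: (le_fsum f b); rewrite hs //.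
Qed.

Lemma count_lvl (B : finType) T (P : pred {ffun B -> nat}) : level_count B T P = count P (lvl B T).
Proof.
rewrite /level_count /lvl count_map -sum1_count.
rewrite -sum1_card big_enum_cond /= [LHS]big_mkcond [RHS]big_mkcond /=.
apply eq_bigr => g _. rewrite !inE. by case: (_ == _).
Qed.

Lemma sum_delta (B : finType) (c : B) : \sum_(b : B) (b == c : nat) = 1.
Proof. rewrite (bigD1 c) //= eqxx big1 // => b /negbTE -> //. Qed.

Lemma fsum_adde (B : finType) (f : {ffun B -> nat}) c : fsum (@adde B f c) = (fsum f).+1.
Proof.
rewrite /fsum /adde; under eq_bigr do rewrite ffunE.
by rewrite big_split /= sum_delta addn1.
Qed.

Lemma count_sum T (P : pred T) s : count P s = \sum_(x <- s) (P x : nat).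
Proof. rewrite -sum1_count big_mkcond /=; apply eq_bigr => x _; by case: (P x). Qed.

Lemma dc (B : finType) T (P : pred {ffun B -> nat}) :
  \sum_(f <- lvl B T) \sum_(c : B) (f c).+1 * P (adde f c) = T.+1 * count P (lvl B T.+1).
Proof.
rewrite exchange_big /=.
transitivity (\sum_(c : B) \sum_(g <- lvl B T.+1) g c * P g).
  apply eq_bigr => c _.
  rewrite [in RHS](bigID (fun g : {ffun B -> nat} => 0 < g c)) /= [X in _ = _ + X]big1 ?addn0;
    last by move=> g; rewrite lt0n negbK => /eqP ->.
  rewrite -[in RHS]big_filter.
  have hperm : perm_eq (map (fun f => @adde B f c) (lvl B T)) [seq g <- lvl B T.+1 | 0 < (g : {ffun B -> nat}) c].
    apply: uniq_perm.
    - rewrite map_inj_uniq ?lvl_uniq // => f1 f2 /ffunP e; apply/ffunP => b.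
      have := e b; rewrite !ffunE; apply: addIn.
    - by rewrite filter_uniq ?lvl_uniq.
    move=> g; rewrite mem_filter; apply/mapP/andP.
    + case=> f; rewrite mem_lvl => /eqP hs ->; split.
      * by rewrite ffunE eqxx addn1.
      * by rewrite mem_lvl fsum_adde hs.
    + rewrite mem_lvl => -[hg /eqP hs]. exists [ffun b => g b - (b == c)].
      * rewrite mem_lvl; apply/eqP. apply: succn_inj. rewrite -(fsum_adde _ c) -hs.
        congr fsum; apply/ffunP => b; rewrite !ffunE.
        case: eqP => [->|_] /=; lia.
      * apply/ffunP => b; rewrite !ffunE. case: eqP => [->|_] /=; lia.
  rewrite -(perm_big _ hperm) [in RHS]big_map. apply eq_bigr => f _.
  by rewrite ffunE eqxx addn1.
rewrite exchange_big /= count_sum big_distrr /=. apply eq_big_seq => g.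
rewrite mem_lvl => /eqP hs.
rewrite -big_distrl /= -hs /fsum mulnC //.
Qed.

Lemma sum_lt (B : finType) (F G : B -> nat) b :
  (forall x, F x <= G x) -> F b < G b -> \sum_x F x < \sum_x G x.
Proof.
move=> hle hlt; rewrite (bigD1 b) //= [X in _ < X](bigD1 b) //=.
have := @leq_sum _ (index_enum B) (fun x => x != b) F G (fun x _ => hle x). lia.
Qed.

Lemma up_adde (B : finType) (M : pred {ffun B -> nat}) f c :
  upper_set B M -> M f -> M (adde f c).
Proof. move=> up Mf; apply: (up f) => // b; rewrite ffunE leq_addr //. Qed.

Lemma mono_eq (B : finType) T (M : pred {ffun B -> nat}) : upper_set B M ->
  (T + #|B|) * count M (lvl B T) +
  \sum_(f <- lvl B T) \sum_(c : B) (f c).+1 * (M (adde f c) - M f)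
  = T.+1 * count M (lvl B T.+1).
Proof.
move=> up. rewrite -dc count_sum big_distrr /= -big_split /=.
apply eq_big_seq => f; rewrite mem_lvl => /eqP hs.
have -> : T + #|B| = \sum_(c : B) (f c).+1.
  by rewrite -hs /fsum -sum1_card -big_split /=; apply eq_bigr => c _; rewrite addn1.
rewrite mulnC big_distrr /= -big_split /=. apply eq_bigr => c _.
rewrite [M f * _]mulnC -mulnDr. congr (_ * _).
case Mf: (M f) => /=; last by rewrite subn0.
by rewrite (up_adde c up Mf).
Qed.

Lemma S_eq (B : finType) T :
  (T + #|B|) * size (lvl B T) = T.+1 * size (lvl B T.+1).
Proof.
have := @mono_eq B T predT (fun _ _ _ _ => isT).
rewrite !count_predT big1_seq ?addn0 //= => f _; rewrite big1 // => c _; rewrite muln0 //.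
Qed.

Lemma A_le (B : finType) T (M : pred {ffun B -> nat}) : upper_set B M ->
  (T + #|B|) * count M (lvl B T) <= T.+1 * count M (lvl B T.+1).
Proof. move=> up; rewrite -(mono_eq T up) leq_addr //. Qed.

Lemma path_lem (B : finType) T (M : pred {ffun B -> nat}) (up : upper_set B M)
  (h : {ffun B -> nat}) :
  fsum h = T -> M h -> forall d (f : {ffun B -> nat}), \sum_b (h b - f b) <= d ->
  fsum f = T -> ~~ M f ->
  exists f1 c, fsum f1 = T /\ ~~ M f1 /\ M (adde f1 c).
Proof.
move=> hs Mh; elim=> [|d IH] f hd fs nMf.
  exfalso; move: nMf; rewrite (up _ _ Mh) // => b.
  move: hd; rewrite leqn0 sum_nat_eq0 => /forallP /(_ b) /=; rewrite subn_eq0 //.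
case: (boolP [forall b, h b <= f b]) => [/forallP hle | ].
  by exfalso; rewrite (up _ _ Mh hle) in nMf.
rewrite negb_forall => /existsP [b hb]; rewrite -ltnNge in hb.
have [c hc] : exists c, h c < f c.
  case: (boolP [exists c, h c < f c]) => [/existsP//|]; rewrite negb_exists => /forallP hc; exfalso.
  have : fsum f < fsum h by apply: (sum_lt (b := b)) => // x; move: (hc x); rewrite -leqNgt.
  by rewrite fs hs ltnn.
have bc : b != c by apply/eqP => e; subst c; lia.
set g := [ffun x => f x - (x == c)].
have gc : adde g c = f.
  apply/ffunP => x; rewrite !ffunE; case: eqP => [->|_] /=; lia.
set f' := adde g b.
have fs' : fsum f' = T by rewrite fsum_adde -fs -gc fsum_adde.
case Mf': (M f').
  exists f, b; split => //; split => //. apply: (up f') => // x; rewrite !ffunE.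
  case: eqP => [->|_] /=; rewrite ?(negbTE bc) /=; lia.
apply: (IH f') => //; last by rewrite Mf'.
rewrite -ltnS; apply: leq_trans hd; apply: (sum_lt (b := b)).
  move=> x; rewrite !ffunE. case: (x =P c) => [->|_] /=.
    rewrite (eq_sym c b) (negbTE bc) /=; lia.
  case: (x =P b) => [->|_] /=; lia.
rewrite !ffunE eqxx (negbTE bc) /=. lia.
Qed.

Lemma A_lt (B : finType) T (M : pred {ffun B -> nat}) : upper_set B M ->
  0 < count M (lvl B T) -> count M (lvl B T) < size (lvl B T) ->
  (T + #|B|) * count M (lvl B T) < T.+1 * count M (lvl B T.+1).
Proof.
move=> up hpos hlt.
move: hpos; rewrite -has_count => /hasP [h hin Mh].
have : 0 < count (predC M) (lvl B T).
  move: hlt; rewrite -(count_predC M (lvl B T)); lia.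
rewrite -has_count => /hasP [f fin /= nMf].
move: hin fin; rewrite !mem_lvl => /eqP hs /eqP fs.
have [f1 [c [f1s [nM1 M1]]]] := path_lem up hs Mh (leqnn _) fs nMf.
rewrite -(mono_eq T up) -[X in X < _]addn0 ltn_add2l.
have f1in : f1 \in lvl B T by rewrite mem_lvl f1s.
rewrite (bigD1_seq f1) ?lvl_uniq //= (bigD1 c) //= M1 (negbTE nM1) /=.
rewrite muln1; lia.
Qed.

Lemma S_pos (B : finType) T : 0 < #|B| -> 0 < size (lvl B T).
Proof.
move=> hB; elim: T => [|T IH].
  rewrite -has_predT; apply/hasP; exists [ffun => 0] => //.
  rewrite mem_lvl /fsum big1 // => b _; rewrite ffunE //.
have := S_eq B T. move: IH; set x := size _; set y := size _ => IH e.
have : 0 < T.+1 * y by rewrite -e muln_gt0 IH andbT; lia.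
rewrite muln_gt0 => /andP [] //.
Qed.

Lemma S_mono (B : finType) T : 0 < #|B| -> size (lvl B T) <= size (lvl B T.+1).
Proof.
move=> hB; have := S_eq B T; set x := size _; set y := size _ => e.
rewrite -(@leq_pmul2l T.+1) // -e leq_mul2r; lia.
Qed.

Lemma S_monoD (B : finType) T s : 0 < #|B| -> size (lvl B T) <= size (lvl B (T + s)).
Proof.
move=> hB; elim: s => [|s IH]; first by rewrite addn0.
by apply: leq_trans IH _; rewrite addnS S_mono.
Qed.

Lemma S_grow (B : finType) T s : 0 < #|B| ->
  T.+1 * (size (lvl B (T + s)) - size (lvl B T)) <= s * (#|B| - 1) * size (lvl B (T + s)).
Proof.
move=> hB; elim: s => [|s IH]; first by rewrite addn0 subnn muln0.
have e := S_eq B (T + s). have m := S_mono (T + s) hB. have hz := S_monoD T s hB.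
rewrite addnS.
move: IH e m hz; set x := size (lvl B (T + s)); set y := size (lvl B (T + s).+1).
set z := size (lvl B T); set n := #|B| => IH e m hz.
have h1 : T.+1 * (y - x) <= (n - 1) * y.
  have : (T + s).+1 * (y - x) = (n - 1) * x.
    rewrite mulnBr -e -mulnBl; congr (_ * x); lia.
  move=> e2. apply: (@leq_trans ((T + s).+1 * (y - x))).
    apply: leq_mul => //; lia.
  rewrite e2 leq_mul2l m orbT //.
have h2 : s * (n - 1) * x <= s * (n - 1) * y by rewrite leq_mul2l m orbT.
have -> : y - z = (y - x) + (x - z) by lia.
have -> : s.+1 * (n - 1) * y = (n - 1) * y + s * (n - 1) * y.
  by rewrite mulSn !mulnDl.
rewrite mulnDr; apply: leq_add => //; apply: leq_trans IH h2.
Qed.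

Lemma A_ge (B : finType) T (M : pred {ffun B -> nat}) f0 : upper_set B M -> M f0 ->
  size (lvl B T) <= count M (lvl B (T + fsum f0)).
Proof.
move=> up Mf0.
rewrite -size_filter -(size_map (fun f : {ffun B -> nat} => [ffun b => f b + f0 b]) (lvl B T)).
apply: uniq_leq_size.
  rewrite map_inj_uniq ?lvl_uniq // => f1 f2 /ffunP e; apply/ffunP => b.
  have := e b; rewrite !ffunE; apply: addIn.
move=> g /mapP [f fin ->]; rewrite mem_filter; apply/andP; split.
  apply: (up f0) => // b; rewrite ffunE leq_addl //.
move: fin; rewrite !mem_lvl => /eqP <-; apply/eqP.
rewrite /fsum -big_split /=; apply eq_bigr => b _; rewrite ffunE //.
Qed.

Lemma A_empty (B : finType) T (M : pred {ffun B -> nat}) :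
  (forall f, ~~ M f) -> count M (lvl B T) = 0.
Proof. move=> h; apply/eqP; rewrite -leqn0 leqNgt -has_count; apply/hasP => -[f _]; by rewrite (negbTE (h f)). Qed.
Local Open Scope R_scope.
Open Scope R_scope.

Lemma leR (n m : nat) : (n <= m)%nat -> INR n <= INR m.
Proof. by move/leP; apply le_INR. Qed.
Lemma ltR (n m : nat) : (n < m)%nat -> INR n < INR m.
Proof. by move/ltP; apply lt_INR. Qed.
Lemma INR_muln (n m : nat) : INR (n * m)%nat = INR n * INR m.
Proof. by rewrite -mult_INR. Qed.
Lemma INR_subn (n m : nat) : (m <= n)%nat -> INR (n - m)%nat = INR n - INR m.
Proof. by move/leP => h; rewrite -minus_INR. Qed.

Lemma ratio_le (a b c d : nat) : (0 < b)%nat -> (0 < d)%nat -> (a * d <= c * b)%nat ->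
  INR a / INR b <= INR c / INR d.
Proof.
move=> /ltR hb /ltR hd /leR; rewrite !INR_muln /= => h; simpl in hb, hd.
apply (Rmult_le_reg_r (INR b * INR d)); first nra.
replace (INR a / INR b * (INR b * INR d)) with (INR a * INR d) by (field; lra).
replace (INR c / INR d * (INR b * INR d)) with (INR c * INR b) by (field; lra).
lra.
Qed.

Lemma ratio_lt (a b c d : nat) : (0 < b)%nat -> (0 < d)%nat -> (a * d < c * b)%nat ->
  INR a / INR b < INR c / INR d.
Proof.
move=> /ltR hb /ltR hd /ltR; rewrite !INR_muln /= => h; simpl in hb, hd.
apply (Rmult_lt_reg_r (INR b * INR d)); first nra.
replace (INR a / INR b * (INR b * INR d)) with (INR a * INR d) by (field; lra).
replace (INR c / INR d * (INR b * INR d)) with (INR c * INR b) by (field; lra).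
lra.
Qed.

Lemma ratio_pos (a b : nat) : (0 < a)%nat -> (0 < b)%nat -> 0 < INR a / INR b.
Proof. move=> /ltR ha /ltR hb; apply Rdiv_lt_0_compat; simpl in *; lra. Qed.

Lemma ratio_lt1 (a b : nat) : (a < b)%nat -> INR a / INR b < 1.
Proof.
move=> h; have hb : (0 < b)%nat by lia. move: h hb => /ltR h /ltR hb; simpl in hb.
apply (Rmult_lt_reg_r (INR b)) => //. unfold Rdiv; rewrite Rmult_assoc Rinv_l; lra.
Qed.

Lemma ratio_1 (b : nat) : (0 < b)%nat -> INR b / INR b = 1.
Proof. move=> /ltR hb; simpl in hb; field; lra. Qed.

Lemma ratio_0 (b : nat) : INR 0 / INR b = 0.
Proof. rewrite /= /Rdiv Rmult_0_l //. Qed.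

Lemma ratio_close (a S T C N0 : nat) (eps : R) :
  (0 < S)%nat -> (a <= S)%nat -> (T.+1 * (S - a) <= C * S)%nat -> (0 < N0)%nat -> (N0 <= T.+1)%nat ->
  / INR N0 < eps / (INR C + 1) -> Rabs (INR a / INR S - 1) < eps.
Proof.
move=> hS haS h hN0 hNT heps.
move/leR: h; rewrite !INR_muln INR_subn // => h.
move: hS hN0 hNT haS => /ltR hS /ltR hN0 /leR hNT /leR haS. simpl in hS, hN0.
have hC : 0 <= INR C by apply pos_INR.
set x := INR a in h haS *; set y := INR S in h haS hS *; set t := INR T.+1 in h hNT *.
set c := INR C in h hC heps *; set n := INR N0 in hN0 hNT heps *.
have ht : 0 < t by lra.
have e1 : Rabs (x / y - 1) = (y - x) / y.
  rewrite Rabs_left1. field; lra.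
  apply (Rmult_le_reg_r y) => //. unfold Rdiv; rewrite Rmult_minus_distr_r Rmult_assoc Rinv_l; lra.
rewrite e1.
have e2 : (y - x) / y <= c / t.
  apply (Rmult_le_reg_r (y * t)); first nra.
  replace ((y - x) / y * (y * t)) with (t * (y - x)) by (field; lra).
  replace (c / t * (y * t)) with (c * y) by (field; lra). lra.
have e3 : c / t <= (c + 1) / n.
  apply (Rmult_le_reg_r (n * t)); first nra.
  replace (c / t * (n * t)) with (c * n) by (field; lra).
  replace ((c + 1) / n * (n * t)) with ((c + 1) * t) by (field; lra). nra.
have e4 : (c + 1) / n < eps.
  have : / n * (c + 1) < eps / (c + 1) * (c + 1) by apply Rmult_lt_compat_r; lra.
  replace (eps / (c + 1) * (c + 1)) with eps by (field; lra).
  rewrite /Rdiv Rmult_comm //.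
lra.
Qed.

Lemma abstract (m : nat -> R) (a S : nat -> nat) (C s0 : nat) :
  (forall T, m T = INR (a T) / INR (S T)) ->
  (forall T, 0 < S T)%nat -> (forall T, a T <= S T)%nat ->
  (forall T, a T * S T.+1 <= a T.+1 * S T)%nat ->
  (forall T, 0 < a T -> a T < S T -> a T * S T.+1 < a T.+1 * S T)%nat ->
  (0 < a s0)%nat ->
  (forall T, T.+1 * (S (T + s0) - a (T + s0)) <= C * S (T + s0))%nat ->
  (exists (K N : nat) (r : nat -> R),
      (forall T : nat, (T < K)%nat -> m T = 0) /\
      (forall i : nat, (i < N)%nat -> m (K + i)%nat = r i) /\
      (forall T : nat, (K + N <= T)%nat -> m T = 1) /\
      (forall i : nat, (i < N)%nat -> 0 < r i < 1) /\
      (forall i : nat, (i.+1 < N)%nat -> r i < r i.+1))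
  \/
  (exists (K : nat) (r : nat -> R),
      (forall T : nat, (T < K)%nat -> m T = 0) /\
      (forall i : nat, m (K + i)%nat = r i) /\
      (forall i : nat, 0 < r i) /\
      (forall i : nat, r i < r i.+1) /\
      Un_cv r 1).
Proof.
move=> hm hS hle hmono hstr ha0 hbd.
have pos_step : forall T, (0 < a T -> 0 < a T.+1)%nat.
  move=> T h; have := hmono T; have := hS T; have := hS T.+1.
  move=> h1 h2 h3; have : (0 < a T.+1 * S T)%nat.
    by apply: leq_trans h3; rewrite muln_gt0 h h1.
  by rewrite muln_gt0 => /andP [].
have full_step : forall T, (a T = S T -> a T.+1 = S T.+1)%nat.
  move=> T e; apply/eqP; rewrite eqn_leq hle /=.
  have := hmono T; rewrite e mulnC leq_mul2r; case/orP => //.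
  by rewrite eqn0Ngt hS.
have hex : exists T, (0 < a T)%nat by exists s0.
case: (ex_minnP hex) => K hK minK.
have apos : forall i, (0 < a (K + i))%nat.
  elim=> [|i IH]; first by rewrite addn0.
  by rewrite addnS; apply: pos_step.
have azero : forall T, (T < K)%nat -> m T = 0.
  move=> T hT; rewrite hm; have : a T = 0%nat.
    case: (posnP (a T)) => // h; have := minK _ h; lia.
  move=> ->; apply: ratio_0.
case: (classic (exists T, a T = S T)) => [hfull | hnf].
- left.
  have hex2 : exists T, (a T == S T) by case: hfull => T e; exists T; apply/eqP.
  case: (ex_minnP hex2) => T0 /eqP hT0 minT0.
  have KT0 : (K <= T0)%nat by apply: minK; rewrite hT0.
  exists K, (T0 - K)%nat, (fun i => m (K + i)%nat); split => //; split => //.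
  split.
    move=> T hT; have : (T0 <= T)%nat by lia.
    move=> h; rewrite hm -(subnKC h).
    have -> : forall k, a (T0 + k)%nat = S (T0 + k)%nat.
      elim=> [|k IH]; first by rewrite addn0.
      by rewrite addnS (full_step _ IH).
    by rewrite ratio_1.
  have anf : forall i, (i < T0 - K)%nat -> (a (K + i) < S (K + i))%nat.
    move=> i hi; rewrite ltn_neqAle hle andbT; apply/negP => /eqP e.
    have := minT0 (K + i)%nat; rewrite e eqxx => /(_ isT); lia.
  split.
    move=> i hi; rewrite hm; split; first by apply: ratio_pos.
    exact: ratio_lt1 (anf i hi).
  move=> i hi; rewrite !hm addnS; apply: ratio_lt => //.
  by apply: hstr => //; apply: anf; lia.
- right.
  have alt : forall T, (a T < S T)%nat.
    move=> T; rewrite ltn_neqAle hle andbT; apply/negP => /eqP e; apply: hnf; by exists T.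
  exists K, (fun i => m (K + i)%nat); split => //; split => //; split.
    by move=> i; rewrite hm; apply: ratio_pos.
  split.
    move=> i; rewrite !hm addnS; apply: ratio_lt => //.
    by apply: hstr => //.
  move=> eps heps.
  have hC : 0 < INR C + 1 by have := pos_INR C; lra.
  have [N0 [hN0 N0pos]] := archimed_cor1 (eps / (INR C + 1)) (Rdiv_lt_0_compat _ _ heps hC).
  exists (N0 + s0)%nat => n /leP hn.
  rewrite /R_dist hm.
  have e : (K + n = (K + n - s0) + s0)%nat by lia.
  rewrite e; apply: (ratio_close (C := C) (N0 := N0)) => //.
  - by apply/ltP.
  - lia.
Qed.

Theorem theorem6 (B : finType) (M : pred {ffun B -> nat}) :
  (0 < #|B|)%nat ->
  upper_set B M ->
  (* (1) *)
  ((forall f, ~~ M f) /\ (forall T : nat, mu B T M = 0))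
  \/
  (* (2) *)
  (exists (K N : nat) (r : nat -> R),
      (forall T : nat, (T < K)%nat -> mu B T M = 0) /\
      (forall i : nat, (i < N)%nat -> mu B (K + i) M = r i) /\
      (forall T : nat, (K + N <= T)%nat -> mu B T M = 1) /\
      (forall i : nat, (i < N)%nat -> 0 < r i < 1) /\
      (forall i : nat, (i.+1 < N)%nat -> r i < r i.+1))
  \/
  (* (3) *)
  (exists (K : nat) (r : nat -> R),
      (forall T : nat, (T < K)%nat -> mu B T M = 0) /\
      (forall i : nat, mu B (K + i) M = r i) /\
      (forall i : nat, 0 < r i) /\
      (forall i : nat, r i < r i.+1) /\
      Un_cv r 1).
Proof.
move=> hB up.
case: (classic (exists f, M f)) => [[f0 Mf0] | hne]; last first.
  left; split.
    by move=> f; apply/negP => Mf; apply: hne; exists f.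
  move=> T; rewrite /mu count_lvl A_empty; first exact: ratio_0.
  by move=> f; apply/negP => Mf; apply: hne; exists f.
right.
have hm : forall T, mu B T M = INR (count M (lvl B T)) / INR (size (lvl B T)).
  by move=> T; rewrite /mu !count_lvl count_predT.
apply: (abstract (C := (fsum f0 * (#|B| - 1))%nat) (s0 := fsum f0) hm).
- by move=> T; apply: S_pos.
- by move=> T; apply: count_size.
- move=> T; rewrite -(@leq_pmul2l T.+1) // mulnA [(T.+1 * _)%nat]mulnC -mulnA -S_eq.
  rewrite mulnA [(count M _ * _)%nat]mulnC [(T.+1 * (_ * _))%nat]mulnA.
  by apply: leq_mul => //; apply: A_le.
- move=> T h1 h2; rewrite -(@ltn_pmul2l T.+1) // mulnA [(T.+1 * _)%nat]mulnC -mulnA -S_eq.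
  rewrite mulnA [(count M _ * _)%nat]mulnC [(T.+1 * (_ * _))%nat]mulnA.
  by rewrite ltn_pmul2r ?S_pos //; apply: A_lt.
- have := A_ge 0 up Mf0; rewrite add0n; have := S_pos 0 hB; lia.
- move=> T. apply: leq_trans (S_grow T (fsum f0) hB).
  rewrite leq_mul2l; apply/orP; right.
  have := A_ge T up Mf0; lia.
Qed.
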